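(* Let $d\geq 3$ and let $(M,g)$ be the Kasner spacetime $M=(0,\infty)\times\mathbb{R}^d$, $g=-dt^2+\sum_{i=1}^d t^{2p_i}\,dx_i^2$, with $\sum_i p_i=1$, $\sum_i p_i^2=1$ and at least one $p_i<0$, time-oriented by $\partial_t$. Let $\tau:[a,b)\to M$ be a future (respectively past) directed timelike geodesic that is future (respectively past) inextendible. Then $(t\circ\tau)(s)\to\infty$ (respectively $(t\circ\tau)(s)\to 0$) as $s\to b$.
   Context: $t:M\to(0,\infty)$ is the first coordinate. A curve $\tau:[a,b)\to M$ is future (past) inextendible if it does not extend continuously to $b$ (in the respective time direction). *)

(* Defs.v *)
From Stdlib Require Import Reals.
From Coquelicot Require Import Coquelicot.
Open Scope R_scope.

(* sum over the spatial indices i = 0, ..., d-1 *)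
Definition sumd (d : nat) (f : nat -> R) : R :=
  match d with O => 0 | S n => sum_f_R0 f n end.

Definition kasner_exponents (d : nat) (p : nat -> R) : Prop :=
  sumd d p = 1 /\ sumd d (fun i => p i ^ 2) = 1 /\
  exists i, (i < d)%nat /\ p i < 0.

Definition gcoef (p : nat -> R) (i : nat) (t : R) : R := Rpower t (2 * p i).

(* A curve in M = (0,oo) x R^d is given by its coordinates
   tt : R -> R (time coordinate) and xx i : R -> R (i < d).
   It is defined on [a, b), where b may be +oo. *)
Definition in_dom (a : R) (b : Rbar) (s : R) : Prop := a <= s /\ Rbar_lt s b.

Definition to_end (b : Rbar) : (R -> Prop) -> Prop :=
  match b with
  | Finite r => at_left r
  | p_infty => Rbar_locally p_infty
  | m_infty => Rbar_locally m_infty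
  end.

Definition in_M (a : R) (b : Rbar) (tt : R -> R) : Prop :=
  forall s, in_dom a b s -> 0 < tt s.

(* Geodesic equations of g = -dt^2 + sum t^(2p_i) dx_i^2:
     t'' + sum_i p_i t^(2p_i - 1) (x_i')^2 = 0
     x_i'' + (2 p_i / t) t' x_i' = 0
   (Christoffel symbols Gamma^t_ii = p_i t^(2p_i-1), Gamma^i_ti = p_i / t),
   required on the interior (a,b) of the parameter interval, with the
   coordinates twice differentiable there. *)
Definition kasner_geodesic (d : nat) (p : nat -> R) (a : R) (b : Rbar)
    (tt : R -> R) (xx : nat -> R -> R) : Prop :=
  in_M a b tt /\
  forall s, a < s -> Rbar_lt s b ->
    ex_derive tt s /\ ex_derive (Derive tt) s /\
    (forall i, (i < d)%nat -> ex_derive (xx i) s /\ ex_derive (Derive (xx i)) s) /\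
    Derive (Derive tt) s
      + sumd d (fun i => p i * Rpower (tt s) (2 * p i - 1) * (Derive (xx i) s) ^ 2) = 0 /\
    (forall i, (i < d)%nat ->
       Derive (Derive (xx i)) s + 2 * p i / tt s * Derive tt s * Derive (xx i) s = 0).

Definition timelike (d : nat) (p : nat -> R) (a : R) (b : Rbar)
    (tt : R -> R) (xx : nat -> R -> R) : Prop :=
  forall s, a < s -> Rbar_lt s b ->
    - (Derive tt s) ^ 2 + sumd d (fun i => gcoef p i (tt s) * (Derive (xx i) s) ^ 2) < 0.

(* time orientation by d/dt: a timelike tangent is future directed iff
   g(tau', d/dt) = - t' < 0, i.e. t' > 0 *)
Definition future_directed (a : R) (b : Rbar) (tt : R -> R) : Prop :=
  forall s, a < s -> Rbar_lt s b -> 0 < Derive tt s.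
Definition past_directed (a : R) (b : Rbar) (tt : R -> R) : Prop :=
  forall s, a < s -> Rbar_lt s b -> Derive tt s < 0.

Definition extends_at_end (d : nat) (b : Rbar) (tt : R -> R) (xx : nat -> R -> R) : Prop :=
  exists (t0 : R) (x0 : nat -> R), 0 < t0 /\
    filterlim tt (to_end b) (locally t0) /\
    forall i, (i < d)%nat -> filterlim (xx i) (to_end b) (locally (x0 i)).

Definition inextendible (d : nat) (b : Rbar) (tt : R -> R) (xx : nat -> R -> R) : Prop :=
  ~ extends_at_end d b tt xx.

(* Main.v *)
Require Import Defs.
From Stdlib Require Import Reals Lra Lia Psatz Classical ClassicalEpsilon.
From Coquelicot Require Import Coquelicot.
Open Scope R_scope.


Lemma ball_R (x e y : R) : ball x e y <-> Rabs (y - x) < e.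
Proof. reflexivity. Qed.

Lemma mvt_I (a : R) (b : Rbar) (f : R -> R) :
  (forall s, a < s -> Rbar_lt s b -> ex_derive f s) ->
  forall u v, a < u -> u <= v -> Rbar_lt v b ->
  exists c, a < c /\ Rbar_lt c b /\ u <= c <= v /\ f v - f u = Derive f c * (v - u).
Proof.
  intros Hd u v Hu Huv Hv.
  assert (Hin : forall x, u <= x <= v -> a < x /\ Rbar_lt x b).
  { intros x Hx; split; [lra|]. destruct b; simpl in *; try lra; auto. }
  destruct (MVT_gen f u v (Derive f)) as [c [Hc Heq]].
  - rewrite Rmin_left, Rmax_right; try lra. intros x Hx.
    apply Derive_correct. apply Hd; apply Hin; lra.
  - rewrite Rmin_left, Rmax_right; try lra. intros x Hx.
    apply continuity_pt_filterlim. apply (ex_derive_continuous (K:=R_AbsRing) (V:=R_NormedModule)).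
    apply Hd; apply Hin; lra.
  - rewrite Rmin_left, Rmax_right in Hc; try lra.
    exists c. destruct (Hin c Hc). repeat split; auto; lra.
Qed.

Lemma const_I (a : R) (b : Rbar) (f : R -> R) :
  (forall s, a < s -> Rbar_lt s b -> is_derive f s 0) ->
  forall u v, a < u -> Rbar_lt u b -> a < v -> Rbar_lt v b -> f u = f v.
Proof.
  intros Hd.
  assert (He : forall s, a < s -> Rbar_lt s b -> ex_derive f s).
  { intros s H1 H2; exists 0; auto. }
  assert (K : forall u v, a < u -> u <= v -> Rbar_lt v b -> f u = f v).
  { intros u v H1 H2 H3. destruct (mvt_I a b f He u v H1 H2 H3) as [c [Hc1 [Hc2 [_ Hc]]]].
    rewrite (is_derive_unique _ _ _ (Hd c Hc1 Hc2)) in Hc. lra. }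
  intros u v H1 H2 H3 H4. destruct (Rle_dec u v).
  - apply K; auto.
  - symmetry; apply K; auto; lra.
Qed.

Lemma is_derive_sum (n : nat) (f : nat -> R -> R) (df : nat -> R) (s : R) :
  (forall i, (i <= n)%nat -> is_derive (f i) s (df i)) ->
  is_derive (fun x => sum_f_R0 (fun i => f i x) n) s (sum_f_R0 df n).
Proof.
  induction n as [|n IH]; intros H; simpl.
  - apply H; lia.
  - apply (is_derive_plus (K:=R_AbsRing) (V:=R_NormedModule)).
    + apply IH; intros; apply H; lia.
    + apply H; lia.
Qed.

Lemma is_derive_Rpower_comp (g : R -> R) (e s dg : R) :
  0 < g s -> is_derive g s dg ->
  is_derive (fun x => Rpower (g x) e) s (e * Rpower (g s) (e - 1) * dg).
Proof.
  intros Hp Hg.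
  pose proof (is_derive_comp (fun y => Rpower y e) g s _ _
    (proj2 (is_derive_Reals _ _ _) (derivable_pt_lim_power _ e Hp)) Hg) as H.
  replace (e * Rpower (g s) (e - 1) * dg) with (scal dg (e * Rpower (g s) (e - 1))).
  exact H. unfold scal; simpl; unfold mult; simpl; ring.
Qed.

Lemma exp_le_mono x y : x <= y -> exp x <= exp y.
Proof. intros [H|H]; [left; apply exp_increasing; auto | subst; lra]. Qed.

Lemma Rpower_bound (lo hi t e : R) : 0 < lo -> lo <= t <= hi ->
  Rpower t e <= exp (Rabs e * (Rabs (ln lo) + Rabs (ln hi))).
Proof.
  intros Hlo Ht. unfold Rpower. apply exp_le_mono.
  pose proof (ln_le lo t Hlo (proj1 Ht)) as H1.
  pose proof (ln_le t hi ltac:(lra) (proj2 Ht)) as H2.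
  assert (Rabs (ln t) <= Rabs (ln lo) + Rabs (ln hi)).
  { apply Rabs_le. pose proof (Rle_abs (ln hi)). pose proof (Rle_abs (- ln lo)). rewrite Rabs_Ropp in *.
    pose proof (Rabs_pos (ln lo)). pose proof (Rabs_pos (ln hi)). lra. }
  apply Rle_trans with (Rabs (e * ln t)); [apply Rle_abs|].
  rewrite Rabs_mult. apply Rmult_le_compat_l; auto. apply Rabs_pos.
Qed.


Lemma lip_lim (r s1 K : R) (f : R -> R) : 0 <= K -> s1 < r ->
  (forall u v, s1 <= u < r -> s1 <= v < r -> Rabs (f u - f v) <= K * Rabs (u - v)) ->
  exists y, filterlim f (at_left r) (locally y).
Proof.
  intros HK Hs Hl.
  apply (proj1 (filterlim_locally_cauchy (U:=R_CompleteSpace) (F:=at_left r) f)).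
  intros eps.
  assert (Hd : 0 < Rmin (eps / (K + 1)) (r - s1)).
  { apply Rmin_pos; [apply Rdiv_lt_0_compat; [apply cond_pos|lra]|lra]. }
  exists (fun s => r - Rmin (eps / (K + 1)) (r - s1) < s < r).
  split.
  - exists (mkposreal _ Hd). intros y Hy Hyr. rewrite ball_R in Hy. simpl in Hy.
    apply Rabs_lt_between in Hy. lra.
  - intros u v Hu Hv. rewrite ball_R.
    pose proof (Rmin_l (eps / (K + 1)) (r - s1)). pose proof (Rmin_r (eps / (K + 1)) (r - s1)).
    assert (H1 : Rabs (f v - f u) <= K * Rabs (v - u)) by (apply Hl; lra).
    assert (H2 : Rabs (v - u) < eps / (K + 1)) by (apply Rabs_lt_between; lra).
    assert (H3 : K * Rabs (v - u) <= K * (eps / (K+1))).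
    { apply Rmult_le_compat_l; lra. }
    assert (H4 : K * (eps / (K+1)) < eps).
    { pose proof (cond_pos eps). apply Rmult_lt_reg_r with (K + 1); [lra|].
      unfold Rdiv. replace (K * (eps * / (K + 1)) * (K + 1)) with (K * eps) by (field; lra). nra. }
    lra.
Qed.

Lemma deriv_lip (a r s1 K : R) (f : R -> R) : a < s1 ->
  (forall s, a < s -> s < r -> ex_derive f s) ->
  (forall s, s1 <= s < r -> Rabs (Derive f s) <= K) ->
  forall u v, s1 <= u < r -> s1 <= v < r -> Rabs (f u - f v) <= K * Rabs (u - v).
Proof.
  intros Ha Hd HK.
  assert (W : forall u v, s1 <= u <= v -> v < r -> Rabs (f v - f u) <= K * Rabs (v - u)).
  { intros u v Huv Hv.
    destruct (mvt_I a (Finite r) f (fun s h1 h2 => Hd s h1 h2) u v ltac:(lra) ltac:(lra) Hv)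
      as [c [Hc1 [Hc2 [Hc3 Hc]]]].
    rewrite Hc, Rabs_mult. apply Rmult_le_compat_r; [apply Rabs_pos|]. apply HK. simpl in Hc2; lra. }
  intros u v Hu Hv. destruct (Rle_dec u v).
  - rewrite Rabs_minus_sym, (Rabs_minus_sym u). apply W; lra.
  - apply W; lra.
Qed.


Lemma Rpower_m1 t e : 0 < t -> Rpower t (e - 1) = Rpower t e / t.
Proof. intros Ht. unfold Rminus. rewrite Rpower_plus, Rpower_Ropp, Rpower_1; auto. Qed.

Lemma Rpower_pos' t e : 0 < Rpower t e.
Proof. unfold Rpower; apply exp_pos. Qed.

Definition geo_eqs (n : nat) (p : nat -> R) (a : R) (b : Rbar) (tt : R -> R) (xx : nat -> R -> R) : Prop :=
  forall s, a < s -> Rbar_lt s b ->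
    ex_derive tt s /\ ex_derive (Derive tt) s /\
    (forall i, (i < S n)%nat -> ex_derive (xx i) s /\ ex_derive (Derive (xx i)) s) /\
    Derive (Derive tt) s
      + sumd (S n) (fun i => p i * Rpower (tt s) (2 * p i - 1) * (Derive (xx i) s) ^ 2) = 0 /\
    (forall i, (i < S n)%nat ->
       Derive (Derive (xx i)) s + 2 * p i / tt s * Derive tt s * Derive (xx i) s = 0).

Definition G (p : nat -> R) (tt : R -> R) (xx : nat -> R -> R) (i : nat) (s : R) := Rpower (tt s) (2 * p i) * Derive (xx i) s.
Definition L (n : nat) (p : nat -> R) (tt : R -> R) (xx : nat -> R -> R) (s : R) := - (Derive tt s) ^ 2 +
  sum_f_R0 (fun i => Rpower (tt s) (2 * p i) * (Derive (xx i) s) ^ 2) n.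

Lemma G_const (n : nat) (p : nat -> R) (a : R) (b : Rbar) (tt : R -> R) (xx : nat -> R -> R) (HM : in_M a b tt) (Hg : geo_eqs n p a b tt xx) i : (i < S n)%nat -> forall u v, a < u -> Rbar_lt u b -> a < v -> Rbar_lt v b ->
  G p tt xx i u = G p tt xx i v.
Proof. unfold geo_eqs in Hg.
  intros Hi. apply const_I. intros s H1 H2.
  destruct (Hg s H1 H2) as [Ht [Ht' [Hx [E1 E2]]]].
  destruct (Hx i Hi) as [Hx1 Hx2].
  pose proof (HM s (conj (Rlt_le _ _ H1) H2)) as Hpos.
  pose proof (is_derive_mult _ _ s _ _
     (is_derive_Rpower_comp tt (2 * p i) s _ Hpos (Derive_correct _ _ Ht))
     (Derive_correct _ _ Hx2) (fun x y => Rmult_comm x y)) as H.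
  unfold G. 
  replace 0 with (plus (mult (2 * p i * Rpower (tt s) (2 * p i - 1) * Derive tt s) (Derive (xx i) s))
                (mult (Rpower (tt s) (2 * p i)) (Derive (Derive (xx i)) s))).
  exact H.
  unfold plus, mult; simpl.
  rewrite Rpower_m1 by auto. pose proof (E2 i Hi) as E.
  replace (Derive (Derive (xx i)) s) with (- (2 * p i / tt s * Derive tt s * Derive (xx i) s)) by lra.
  field. lra.
Qed.

Lemma L_const (n : nat) (p : nat -> R) (a : R) (b : Rbar) (tt : R -> R) (xx : nat -> R -> R) (HM : in_M a b tt) (Hg : geo_eqs n p a b tt xx) : forall u v, a < u -> Rbar_lt u b -> a < v -> Rbar_lt v b -> L n p tt xx u = L n p tt xx v.
Proof. unfold geo_eqs in Hg.
  apply const_I. intros s H1 H2.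
  destruct (Hg s H1 H2) as [Ht [Ht' [Hx [E1 E2]]]].
  pose proof (HM s (conj (Rlt_le _ _ H1) H2)) as Hpos.
  pose proof (is_derive_sum n (fun i x => Rpower (tt x) (2 * p i) * (Derive (xx i) x) ^ 2)
     (fun i => - 2 * Derive tt s * (p i * Rpower (tt s) (2 * p i - 1) * Derive (xx i) s ^ 2)) s) as HS.
  assert (HS' : is_derive (fun x => sum_f_R0 (fun i => Rpower (tt x) (2 * p i) * (Derive (xx i) x) ^ 2) n) s
     (- 2 * Derive tt s * sum_f_R0 (fun i => p i * Rpower (tt s) (2 * p i - 1) * Derive (xx i) s ^ 2) n)).
  { rewrite scal_sum. 
    replace (sum_f_R0 (fun i => p i * Rpower (tt s) (2 * p i - 1) * Derive (xx i) s ^ 2 * (-2 * Derive tt s)) n)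
      with (sum_f_R0 (fun i => - 2 * Derive tt s * (p i * Rpower (tt s) (2 * p i - 1) * Derive (xx i) s ^ 2)) n).
    2:{ apply sum_eq; intros; ring. }
    apply HS. intros i Hi.
    assert (Hi' : (i < S n)%nat) by lia.
    destruct (Hx i Hi') as [Hx1 Hx2].
    pose proof (is_derive_mult _ _ s _ _
     (is_derive_Rpower_comp tt (2 * p i) s _ Hpos (Derive_correct _ _ Ht))
     (is_derive_pow _ 2 s _ (Derive_correct _ _ Hx2)) (fun x y => Rmult_comm x y)) as H.
    replace (- 2 * Derive tt s * (p i * Rpower (tt s) (2 * p i - 1) * Derive (xx i) s ^ 2))
      with (plus (mult (2 * p i * Rpower (tt s) (2 * p i - 1) * Derive tt s) (Derive (xx i) s ^ 2))
                (mult (Rpower (tt s) (2 * p i)) (INR 2 * Derive (Derive (xx i)) s * Derive (xx i) s ^ Nat.pred 2))).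
    exact H.
    unfold plus, mult; simpl.
    rewrite !Rpower_m1 by auto. pose proof (E2 i Hi') as E.
    replace (Derive (Derive (xx i)) s) with (- (2 * p i / tt s * Derive tt s * Derive (xx i) s)) by lra.
    field. lra. }
  pose proof (is_derive_pow _ 2 s _ (Derive_correct _ _ Ht')) as HT.
  pose proof (is_derive_plus _ _ s _ _ (is_derive_opp _ s _ HT) HS') as H.
  unfold sumd in E1; cbv iota beta in E1.
  unfold L. replace 0 with (plus (opp (INR 2 * Derive (Derive tt) s * Derive tt s ^ Init.Nat.pred 2))
      (-2 * Derive tt s * sum_f_R0 (fun i : nat => p i * Rpower (tt s) (2 * p i - 1) * Derive (xx i) s ^ 2) n)).
  exact H.
  set (SS := sum_f_R0 (fun i : nat => p i * Rpower (tt s) (2 * p i - 1) * Derive (xx i) s ^ 2) n) in *.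
  unfold plus, opp; simpl.
  replace SS with (- Derive (Derive tt) s) by lra. ring.
Qed.



Theorem lemma3p2 (d : nat) (p : nat -> R) (a : R) (b : Rbar)
  (tt : R -> R) (xx : nat -> R -> R) :
  (3 <= d)%nat ->
  kasner_exponents d p ->
  Rbar_lt a b ->
  kasner_geodesic d p a b tt xx ->
  timelike d p a b tt xx ->
  inextendible d b tt xx ->
  (future_directed a b tt -> filterlim tt (to_end b) (Rbar_locally p_infty)) /\
  (past_directed a b tt -> filterlim tt (to_end b) (locally 0)).
Proof.
  intros Hd Hk Hab [HM Hg] Htl Hin.
  destruct d as [|n]; [lia|].
  assert (Hs0 : exists s0, a < s0 /\ Rbar_lt s0 b).
  { destruct b as [r| |]; simpl in Hab.
    - exists ((a+r)/2); simpl; lra.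
    - exists (a+1); simpl; split; [lra|exact I].
    - contradiction. }
  destruct Hs0 as [s0 [Ha0 Hb0]].
  pose proof (G_const n p a b tt xx HM Hg) as HG.
  pose proof (L_const n p a b tt xx HM Hg) as HL.
  set (m2 := - L n p tt xx s0).
  assert (Hm2 : 0 < m2).
  { unfold m2, L. pose proof (Htl s0 Ha0 Hb0) as T. unfold sumd, gcoef in T. cbv iota beta in T. lra. }
  assert (Hsum_nn : forall s, 0 <= sum_f_R0 (fun i => Rpower (tt s) (2 * p i) * Derive (xx i) s ^ 2) n).
  { intros s. apply cond_pos_sum. intros i. apply Rmult_le_pos. left; apply Rpower_pos'. apply pow2_ge_0. }
  assert (Htsq : forall s, a < s -> Rbar_lt s b -> m2 <= Derive tt s ^ 2).
  { intros s H1 H2. pose proof (HL s s0 H1 H2 Ha0 Hb0). pose proof (Hsum_nn s). unfold m2; unfold L in *. lra. }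
  assert (Hext : forall r s1 lo hi, b = Finite r -> a < s1 < r -> 0 < lo ->
     (forall s, s1 <= s < r -> lo <= tt s <= hi) -> False).
  { intros r s1 lo hi Hb Hs1 Hlo Hbd. subst b.
    set (Lam := Rabs (ln lo) + Rabs (ln hi)).
    set (B := fun i => exp (Rabs (2 * p i) * Lam)).
    assert (Hdom : forall s, s1 <= s < r -> a < s /\ Rbar_lt s (Finite r)). { intros; simpl; lra. }
    assert (Hxd : forall i, (i < S n)%nat -> forall s, s1 <= s < r ->
        Derive (xx i) s = G p tt xx i s0 * Rpower (tt s) (- (2 * p i))).
    { intros i Hi s Hs. destruct (Hdom s Hs). rewrite <- (HG i Hi s s0); auto. unfold G.
      rewrite Rpower_Ropp. field. apply Rgt_not_eq, Rpower_pos'. }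
    assert (HRb : forall i s, s1 <= s < r -> Rpower (tt s) (- (2 * p i)) <= B i).
    { intros i s Hs. unfold B. rewrite <- (Rabs_Ropp (2 * p i)). apply Rpower_bound; auto. }
    assert (Hxb : forall i, (i < S n)%nat -> forall s, s1 <= s < r ->
        Rabs (Derive (xx i) s) <= Rabs (G p tt xx i s0) * B i).
    { intros i Hi s Hs. rewrite Hxd by auto. rewrite Rabs_mult, (Rabs_pos_eq (Rpower _ _)) by (left; apply Rpower_pos').
      apply Rmult_le_compat_l; [apply Rabs_pos| apply HRb; auto]. }
    set (Q := m2 + sum_f_R0 (fun i => G p tt xx i s0 ^ 2 * B i) n).
    assert (Htb : forall s, s1 <= s < r -> Rabs (Derive tt s) <= Rabs Q + 1).
    { intros s Hs. destruct (Hdom s Hs) as [H1 H2].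
      assert (E : Derive tt s ^ 2 = m2 + sum_f_R0 (fun i => Rpower (tt s) (2 * p i) * Derive (xx i) s ^ 2) n).
      { pose proof (HL s s0 H1 H2 Ha0 Hb0). unfold m2. unfold L in *. lra. }
      assert (E2 : sum_f_R0 (fun i => Rpower (tt s) (2 * p i) * Derive (xx i) s ^ 2) n
                   <= sum_f_R0 (fun i => G p tt xx i s0 ^ 2 * B i) n).
      { apply sum_Rle. intros i Hi. rewrite Hxd by (auto; lia).
        replace (Rpower (tt s) (2 * p i) * (G p tt xx i s0 * Rpower (tt s) (- (2 * p i))) ^ 2)
          with (G p tt xx i s0 ^ 2 * Rpower (tt s) (- (2 * p i))).
        - apply Rmult_le_compat_l; [apply pow2_ge_0| apply HRb; auto].
        - rewrite Rpower_Ropp. field. apply Rgt_not_eq, Rpower_pos'. }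
      pose proof (Rle_abs Q).
      assert (Hq : Rabs (Derive tt s) ^ 2 <= Rabs Q) by (rewrite pow2_abs; unfold Q in *; lra).
      pose proof (Rabs_pos (Derive tt s)). pose proof (Rabs_pos Q).
      set (y := Rabs (Derive tt s)) in *. simpl in Hq.
      destruct (Rle_dec y 1); [lra|].
      assert (y * 1 <= y * y) by (apply Rmult_le_compat_l; lra). lra. }
    assert (Ht_lim : exists yt, filterlim tt (at_left r) (locally yt)).
    { apply (lip_lim r s1 (Rabs Q + 1)); [pose proof (Rabs_pos Q); lra | lra |].
      apply (deriv_lip a r s1); [lra| |exact Htb]. intros s h1 h2. exact (proj1 (Hg s h1 h2)). }
    assert (Hx_lim : forall i, exists y, (i < S n)%nat -> filterlim (xx i) (at_left r) (locally y)).
    { intros i. destruct (Nat.lt_ge_cases i (S n)) as [Hi|Hi].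
      - destruct (lip_lim r s1 (Rabs (G p tt xx i s0) * B i) (xx i)) as [y Hy].
        + apply Rmult_le_pos; [apply Rabs_pos| left; apply exp_pos].
        + lra.
        + apply (deriv_lip a r s1); [lra| |apply Hxb; auto]. intros s h1 h2. exact (proj1 (proj1 (proj2 (proj2 (Hg s h1 h2))) i Hi)).
        + exists y; auto.
      - exists 0; intros; lia. }
    destruct (choice _ Hx_lim) as [x0 Hx0].
    destruct Ht_lim as [yt Hyt].
    assert (Hyt_pos : lo <= yt).
    { destruct (Rle_dec lo yt) as [|Hn]; auto. exfalso.
      assert (Hep : 0 < lo - yt) by lra.
      assert (F1 : at_left r (fun s => ball yt (mkposreal _ Hep) (tt s))).
      { apply Hyt. apply locally_ball. }
      assert (F2 : at_left r (fun s => s1 <= s < r)).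
      { assert (Hd' : 0 < r - s1) by lra. exists (mkposreal _ Hd'). intros y Hy Hyr.
        rewrite ball_R in Hy; simpl in Hy. apply Rabs_lt_between in Hy. lra. }
      destruct (filter_ex _ (filter_and _ _ F1 F2)) as [s [Hs1' Hs2]].
      rewrite ball_R in Hs1'; simpl in Hs1'. apply Rabs_lt_between in Hs1'. specialize (Hbd s Hs2). lra. }
    apply Hin. exists yt, x0. split; [lra|]. split; [exact Hyt|]. intros i Hi. apply Hx0; auto. }
  set (mu := Rmin 1 m2).
  assert (Hmu : 0 < mu) by (apply Rmin_pos; lra).
  pose proof (Rmin_l 1 m2) as Hmu1. pose proof (Rmin_r 1 m2) as Hmu2. fold mu in Hmu1, Hmu2.
  split.
  - intros Hf.
    assert (Hdt : forall s, a < s -> Rbar_lt s b -> mu <= Derive tt s).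
    { intros s H1 H2. pose proof (Hf s H1 H2). pose proof (Htsq s H1 H2).
      set (y := Derive tt s) in *. simpl in *.
      destruct (Rle_dec 1 y); [lra|].
      assert (y * y <= y * 1) by (apply Rmult_le_compat_l; lra). lra. }
    assert (Hinc : forall u v, a < u -> u <= v -> Rbar_lt v b -> mu * (v - u) <= tt v - tt u).
    { intros u v H1 H2 H3.
      destruct (mvt_I a b tt (fun s h1 h2 => proj1 (Hg s h1 h2)) u v H1 H2 H3) as [c [Hc1 [Hc2 [Hc3 Hc]]]].
      rewrite Hc. apply Rmult_le_compat_r; [lra|]. apply Hdt; auto. }
    destruct b as [r| |].
    + simpl. intros P [M HMP].
      destruct (classic (exists s1, a < s1 < r /\ M < tt s1)) as [[s1 [Hs1 HMs1]]|Hno].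
      * assert (Hd' : 0 < r - s1) by lra. exists (mkposreal _ Hd'). intros y Hy Hyr.
        rewrite ball_R in Hy; simpl in Hy. apply Rabs_lt_between in Hy. apply HMP.
        pose proof (Hinc s1 y ltac:(lra) ltac:(lra) Hyr).
        assert (0 <= mu * (y - s1)) by (apply Rmult_le_pos; lra). lra.
      * exfalso. simpl in Hb0. apply (Hext r s0 (tt s0) M eq_refl); auto.
        { apply HM. split; simpl; lra. }
        intros s Hs. split.
        -- destruct Hs as [[Hlt|Heq] Hsr]; [|subst; lra].
           pose proof (Hinc s0 s Ha0 ltac:(lra) Hsr).
           assert (0 <= mu * (s - s0)) by (apply Rmult_le_pos; lra). lra.
        -- destruct (Rle_dec (tt s) M) as [|Hn]; auto. exfalso. apply Hno. exists s. split; lra.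
    + intros P [M HMP]. exists (Rmax s0 (s0 + (M - tt s0)/mu)). intros s Hs. apply HMP.
      pose proof (Rmax_l s0 (s0 + (M - tt s0)/mu)). pose proof (Rmax_r s0 (s0 + (M - tt s0)/mu)).
      pose proof (Hinc s0 s Ha0 ltac:(lra) I).
      assert (Hh : mu * ((M - tt s0) / mu) < mu * (s - s0)) by (apply Rmult_lt_compat_l; lra).
      replace (mu * ((M - tt s0) / mu)) with (M - tt s0) in Hh by (field; lra). lra.
    + contradiction.
  - intros Hp.
    assert (Hdt : forall s, a < s -> Rbar_lt s b -> Derive tt s <= - mu).
    { intros s H1 H2. pose proof (Hp s H1 H2). pose proof (Htsq s H1 H2).
      set (y := Derive tt s) in *. simpl in *.
      destruct (Rle_dec y (-1)); [lra|].
      assert ((-y) * (-y) <= (-y) * 1) by (apply Rmult_le_compat_l; lra). lra. }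
    assert (Hdec : forall u v, a < u -> u <= v -> Rbar_lt v b -> tt v - tt u <= - mu * (v - u)).
    { intros u v H1 H2 H3.
      destruct (mvt_I a b tt (fun s h1 h2 => proj1 (Hg s h1 h2)) u v H1 H2 H3) as [c [Hc1 [Hc2 [Hc3 Hc]]]].
      rewrite Hc. apply Rmult_le_compat_r; [lra|]. apply Hdt; auto. }
    destruct b as [r| |].
    + simpl. intros P [eps HP].
      destruct (classic (exists s1, a < s1 < r /\ tt s1 < eps)) as [[s1 [Hs1 Hes1]]|Hno].
      * assert (Hd' : 0 < r - s1) by lra. exists (mkposreal _ Hd'). intros y Hy Hyr.
        rewrite ball_R in Hy; simpl in Hy. apply Rabs_lt_between in Hy. apply HP.
        pose proof (Hdec s1 y ltac:(lra) ltac:(lra) Hyr).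
        assert (0 <= mu * (y - s1)) by (apply Rmult_le_pos; lra).
        assert (0 < tt y) by (apply HM; split; simpl; lra).
        rewrite ball_R. rewrite Rminus_0_r, Rabs_pos_eq by lra. lra.
      * exfalso. simpl in Hb0. apply (Hext r s0 eps (tt s0) eq_refl); auto.
        { apply cond_pos. }
        intros s Hs. split.
        -- destruct (Rle_dec eps (tt s)) as [|Hn]; auto. exfalso. apply Hno. exists s. split; lra.
        -- destruct Hs as [[Hlt|Heq] Hsr]; [|subst; lra].
           pose proof (Hdec s0 s Ha0 ltac:(lra) Hsr).
           assert (0 <= mu * (s - s0)) by (apply Rmult_le_pos; lra). lra.
    + exfalso.
      assert (Hts0 : 0 < tt s0) by (apply HM; split; [lra|exact I]).
      assert (Hq : 0 < tt s0 / mu) by (apply Rdiv_lt_0_compat; lra).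
      assert (Hle : s0 <= s0 + tt s0 / mu + 1) by lra.
      pose proof (Hdec s0 _ Ha0 Hle I) as H.
      assert (Hp0 : 0 < tt (s0 + tt s0 / mu + 1)) by (apply HM; split; [lra|exact I]).
      replace (- mu * (s0 + tt s0 / mu + 1 - s0)) with (- tt s0 - mu) in H by (field; lra).
      lra.
    + contradiction.
Qed.
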